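(* Let $\Omega\subset\mathbb{R}^n$ be a convex body and fix an incentre $c$ of $\Omega$. For any $\varepsilon\in[0,\mathrm{In}(\Omega)]$, $$L_\varepsilon(\Omega)\subset \Omega\setminus \mathrm{Int}\Big[\Big(1-\frac{\varepsilon}{\mathrm{In}(\Omega)}\Big)\cdot\Omega\Big],$$ where for $\lambda\ge 0$, $\lambda\cdot\Omega=\{c+\lambda(x-c): x\in\Omega\}$ denotes the enlargement of $\Omega$ with scale factor $\lambda$ about $c$.
   Context: A convex body is a convex, closed subset of $\mathbb{R}^n$ with non-empty interior. $\mathrm{In}(\Omega)$ is the inradius of $\Omega$: the largest distance from $\partial\Omega$ of a point of $\Omega$ (equivalently the radius of the largest ball contained in $\Omega$). An incentre is a point of $\Omega$ at maximal distance $\mathrm{In}(\Omega)$ from $\partial\Omega$. The $\varepsilon$-inner neighbourhood is $L_\varepsilon(\Omega)=\{x\in\Omega:\|x-y\|\le\varepsilon\text{ for some }y\in\partial\Omega\}$. $\mathrm{Int}$ denotes interior. *)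

(* Defs.v *)
(* R^n is modelled as 'rV[R]_n over R : realType,
   with its (product = Euclidean) topology from MathComp-Analysis and the
   Euclidean norm defined explicitly below. *)
From HB Require Import structures.
From mathcomp Require Import all_boot all_order all_algebra.
From mathcomp Require Import all_classical all_reals all_analysis.
Set Implicit Arguments. Unset Strict Implicit. Unset Printing Implicit Defensive.
Import Order.TTheory GRing.Theory Num.Theory.
Import numFieldNormedType.Exports.
Local Open Scope classical_set_scope.
Local Open Scope ring_scope.

Definition enorm {R : realType} {n : nat} (x : 'rV[R]_n) : R :=
  Num.sqrt (\sum_(i < n) x ord0 i ^+ 2).

Definition convex_set {R : realType} {n : nat} (A : set 'rV[R]_n) : Prop :=
  forall x y (t : R), A x -> A y -> 0 <= t -> t <= 1 ->
    A (t *: x + (1 - t) *: y).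

Definition convex_body {R : realType} {n : nat} (A : set 'rV[R]_n) : Prop :=
  [/\ convex_set A, closed A & interior A !=set0].

Definition bd {R : realType} {n : nat} (A : set 'rV[R]_n) : set 'rV[R]_n :=
  closure A `\` interior A.

Definition dist_bd {R : realType} {n : nat} (A : set 'rV[R]_n) (x : 'rV[R]_n) : R :=
  inf [set enorm (x - y) | y in bd A].

Definition inradius {R : realType} {n : nat} (A : set 'rV[R]_n) : R :=
  sup [set dist_bd A x | x in A].

Definition is_incentre {R : realType} {n : nat} (A : set 'rV[R]_n) (c : 'rV[R]_n) : Prop :=
  A c /\ forall x, A x -> dist_bd A x <= dist_bd A c.

Definition inner_nbhd {R : realType} {n : nat} (A : set 'rV[R]_n) (eps : R) : set 'rV[R]_n :=
  [set x | A x /\ exists y, bd A y /\ enorm (x - y) <= eps].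

Definition scale_about {R : realType} {n : nat} (c : 'rV[R]_n) (lam : R) (A : set 'rV[R]_n) : set 'rV[R]_n :=
  [set c + lam *: (x - c) | x in A].

(* Main.v *)
Require Import Defs.
From HB Require Import structures.
From mathcomp Require Import all_boot all_order all_algebra.
From mathcomp Require Import all_classical all_reals all_analysis.
From mathcomp Require Import ring lra.
Import Order.TTheory GRing.Theory Num.Theory.
Import numFieldNormedType.Exports.
Local Open Scope classical_set_scope.
Local Open Scope ring_scope.

Section H.
Context {R : realType} {n : nat}.
Implicit Types (v w : 'rV[R]_n).

Lemma enorm_ge0 v : 0 <= enorm v.
Proof. exact: sqrtr_ge0. Qed.

Lemma enormZ (k : R) v : enorm (k *: v) = `|k| * enorm v.
Proof.
rewrite /enorm.
under eq_bigr do rewrite mxE exprMn.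
by rewrite -mulr_sumr sqrtrM ?sqr_ge0 // sqrtr_sqr.
Qed.

Lemma enorm_eq0 v : enorm v = 0 -> v = 0.
Proof.
rewrite /enorm => /eqP; rewrite sqrtr_eq0 => h.
have h0 : \sum_(i < n) v ord0 i ^+ 2 = 0.
  by apply/eqP; rewrite eq_le h sumr_ge0 // => i _; rewrite sqr_ge0.
apply/rowP => i; rewrite mxE.
have := @psumr_eq0P _ _ predT (fun i => v ord0 i ^+ 2) (fun i _ => sqr_ge0 (v ord0 i)) h0 i isT.
by move/eqP; rewrite sqrf_eq0 => /eqP.
Qed.

Lemma enorm_cont (a : 'rV[R]_n) : continuous (fun z : 'rV[R]_n => enorm (z - a)).
Proof.
move=> z; rewrite /enorm.
apply: (continuous_comp (f := fun z : 'rV[R]_n => \sum_(i < n) (z - a) ord0 i ^+ 2)); last first.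
  exact: sqrt_continuous.
have hc : continuous (fun x : R * R => x.1 + x.2) := fun x => add_continuous x.
have := @continuous_big R 'I_n +%R 0 xpredT hc _ (index_enum 'I_n)
   (fun i (z : 'rV[R]_n) => (z - a) ord0 i ^+ 2).
apply => i _ y.
have h : {for y, continuous (fun z : 'rV[R]_n => (z - a) ord0 i)}.
  apply: (@continuous_comp _ _ _ (fun z : 'rV[R]_n => z - a) (fun M : 'rV[R]_n => M ord0 i)).
    exact: (@cvgD _ _ _ (nbhs y) _ id (fun=> - a) y (- a) cvg_id (cvg_cst _)).
  exact: coord_continuous.
exact: (continuousM h h).
Qed.


Lemma ball_in (O : set 'rV[R]_n) c r q : closed O -> O c ->
  (forall p, bd O p -> r <= enorm (c - p)) -> enorm (q - c) < r -> O q.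
Proof.
move=> cO Oc hb hq; have [//|Oq] := pselect (O q).
pose g := fun t : R => c + t *: (q - c).
have gc : continuous g.
  move=> t.
  exact: (@cvgD _ _ _ (nbhs t) _ (fun=> c) (fun x => x *: (q - c)) _ _ (cvg_cst _) (cvgZr_tmp cvg_id)).
pose S := [set t : R | (0 <= t <= 1) /\ O (g t)].
have S0 : S 0 by split; rewrite ?lexx ?ler01 // /g scale0r addr0.
have hS : has_sup S.
  by split; [exists 0 | exists 1 => t [/andP[_ ?] _]].
pose s := sup S.
have s0 : 0 <= s by exact: sup_upper_bound hS _ S0.
have s1 : s <= 1 by apply: ge_sup; [exists 0 | move=> t [/andP[_ ?] _]].
have cl : closure O (g s).
  move=> B /(gc s) /nbhs_ballP [e e0 he].
  have [t St lt] := sup_adherent e0 hS.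
  exists (g t); split; first exact: St.2.
  apply: he; rewrite -ball_normE /ball_ /=.
  have ts : t <= s := sup_upper_bound hS St.
  by rewrite ger0_norm ?subr_ge0 // ltrBlDr -ltrBlDl.
have Ogs := cO _ cl.
have [hs1|hs1] := ltrP s 1; last first.
  move: Ogs; have -> : s = 1 by apply/eqP; rewrite eq_le s1 hs1.
  by rewrite /g scale1r addrC subrK.
have ni : ~ interior O (g s).
  move=> /(gc s) /nbhs_ballP [e e0 he].
  pose t := Num.min (s + e / 2) 1.
  have st : s < t by rewrite lt_min hs1 andbT ltrDl divr_gt0.
  have St : S t.
    split; first by rewrite (le_trans s0 (ltW st)) ge_min lexx orbT.
    apply: he; rewrite -ball_normE /ball_ /= distrC ger0_norm ?subr_ge0 ?(ltW st) //.
    rewrite ltrBlDl; apply: (@le_lt_trans _ _ (s + e / 2)); first by rewrite ge_min lexx.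
    by rewrite ltrD2l ltr_pdivrMr // ltr_pMr // ltr1n.
  by have := sup_upper_bound hS St; rewrite leNgt st.
have := hb _ (conj cl ni).
have -> : c - g s = (- s) *: (q - c) by rewrite /g opprD addrA subrr add0r scaleNr.
rewrite enormZ normrN ger0_norm // => h.
have : s * enorm (q - c) <= enorm (q - c) by rewrite ler_piMl ?enorm_ge0.
by move=> h2; have := lt_le_trans hq (le_trans h h2); rewrite ltxx.

Qed.

End H.

Theorem mainTheorem2 (R : realType) (n : nat) (Omega : set 'rV[R]_n)
  (c : 'rV[R]_n) (eps : R) :
  convex_body Omega -> is_incentre Omega c ->
  0 <= eps -> eps <= inradius Omega ->
  inner_nbhd Omega eps `<=`
    Omega `\` interior (scale_about c (1 - eps / inradius Omega) Omega).
Proof.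
move=> [cvx cO _] [Oc cmax] he0 her x [Ox [y [bdy hxy]]].
split => // hint.
move: hint her; set r := inradius Omega => hint her.
have [e0|epos] := eqVneq eps 0.
  move: hint; rewrite e0 mul0r subr0.
  have -> : scale_about c 1 Omega = Omega.
    rewrite /scale_about; apply/seteqP; split => z.
      by move=> [w Ow <-]; rewrite scale1r addrC subrK.
    by move=> Oz; exists z => //; rewrite scale1r addrC subrK.
  rewrite e0 in hxy.
  have : x = y.
    have h0 : enorm (x - y) = 0 by apply/eqP; rewrite eq_le hxy enorm_ge0.
    by apply/eqP; rewrite -subr_eq0; apply/eqP; exact: enorm_eq0.
  by move=> ->; exact: bdy.2.
have ep : 0 < eps by rewrite lt_def epos he0.
have rp : 0 < r := lt_le_trans ep her.
have rE : r = dist_bd Omega c.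
  apply/eqP; rewrite eq_le; apply/andP; split.
    apply: ge_sup; first by exists (dist_bd Omega c); exists c.
    by move=> _ [z Oz <-]; exact: cmax.
  apply: sup_upper_bound; last by exists c.
  split; first by exists (dist_bd Omega c); exists c.
  by exists (dist_bd Omega c) => _ [z Oz <-]; exact: cmax.
have hb : forall p, bd Omega p -> r <= enorm (c - p).
  move=> p bp; rewrite rE; apply: ge_inf; last by exists p.
  by exists 0 => _ [z _ <-]; exact: enorm_ge0.
set lam := 1 - eps / r in hint.
have hc : {for 0, continuous (fun t : R => x + t *: (y - x))}.
  exact: (@cvgD _ _ _ (nbhs (0:R)) _ (fun=> x) (fun t => t *: (y - x)) _ _ (cvg_cst _) (cvgZr_tmp cvg_id)).
have : nbhs (x + 0 *: (y - x)) (scale_about c lam Omega) by rewrite scale0r addr0.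
move=> /hc /nbhs_ballP [e e0 he].
pose t := Num.min (e / 2) (1 / 2).
have t0 : 0 < t by rewrite lt_min !divr_gt0.
have t1 : t < 1.
  apply: (@le_lt_trans _ _ (1 / 2)); first by rewrite ge_min lexx orbT.
  by rewrite ltr_pdivrMr // mul1r ltr1n.
have tb : ball (0:R) e t.
  rewrite -ball_normE /ball_ /= sub0r normrN ger0_norm ?ltW //.
  apply: (@le_lt_trans _ _ (e / 2)); first by rewrite ge_min lexx.
  by rewrite ltr_pdivrMr // ltr_pMr // ltr1n.
have [w Ow hw] := he t tb.
move: hw; set xt := x + t *: (y - x) => hw.
have hyx : enorm (y - xt) < eps.
  have -> : y - xt = (1 - t) *: (y - x).
    by rewrite /xt scalerBl scale1r opprD addrA.
  have -> : y - x = (-1) *: (x - y) by rewrite scaleN1r opprB.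
  rewrite !enormZ normrN normr1 mul1r ger0_norm ?subr_ge0 ?ltW //.
  apply: (@le_lt_trans _ _ ((1 - t) * eps)); first by rewrite ler_wpM2l // subr_ge0 ltW.
  by rewrite gtr_pMl // ltrBlDr ltrDl.
apply: bdy.2.
have : nbhs y [set z | enorm (z - xt) < eps].
  have := @enorm_cont R n xt y [set u | u < eps].
  apply; apply/nbhs_ballP; exists (eps - enorm (y - xt)) => /=; first by rewrite subr_gt0.
  move=> u; rewrite -ball_normE /ball_ /= => hu.
  have h1 : u - enorm (y - xt) <= `|enorm (y - xt) - u| by rewrite distrC ler_norm.
  lra.
apply: filterS => z hz.
have rp' : 0 < r / eps by rewrite divr_gt0.
pose q := c + (r / eps) *: (z - xt).
have Oq : Omega q.
  have := @ball_in R n Omega c r q cO Oc hb.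
  apply; rewrite /q addrAC subrr add0r enormZ ger0_norm ?ltW //.
  apply: (@lt_le_trans _ _ (r / eps * eps)); first by rewrite ltr_pM2l.
  by rewrite divfK ?gt_eqF.
have lam0 : 0 <= lam by rewrite subr_ge0 ler_pdivrMr // mul1r.
have lam1 : lam <= 1 by rewrite gerBl divr_ge0 // ltW.
have := cvx w q lam Ow Oq lam0 lam1.
have hk : (1 - lam) * (r / eps) = 1.
  by rewrite /lam opprB addrC subrK mulrA divfK ?gt_eqF // divff // gt_eqF.
rewrite /q scalerDr scalerA hk scale1r -hw.
have -> : lam *: w + ((1 - lam) *: c + (z - (c + lam *: (w - c)))) = z.
  apply/rowP => i; rewrite !mxE; ring.
by [].
Qed.
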